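(* Let $U(y)=\sum_{k\in\mathbb Z^m_+,\ \max_jk_j\le n}c_ky^k$ be a polynomial in $m$ variables with complex coefficients of degree at most $n$ in each variable. (a) If $0<A<B$, then $$\sum_k|c_k|\le\Big[T_n\Big(\frac{B+A+2}{B-A}\Big)\Big]^m\|U\|_{C([A,B]^m)}.$$ (b) If $b>0$, then $$\sum_k|c_k|\le\Big(\frac{e^{b/4}+e^{-b/4}}{e^{b/4}-e^{-b/4}}\Big)^{mn}\|U\|_{C([e^{-b},e^b]^m)}.$$
   Context: $T_n(u)=\frac12((u+\sqrt{u^2-1})^n+(u-\sqrt{u^2-1})^n)$ is the Chebyshev polynomial of the first kind; $[A,B]^m$ is the cube $\{y\in\mathbb R^m:A\le y_j\le B\ \forall j\}$; $y^k=\prod_jy_j^{k_j}$; $\|U\|_{C(S)}=\max_S|U|$. *)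

(* Defs.v *)
From HB Require Import structures.
From mathcomp Require Import all_boot all_order all_algebra.
From mathcomp Require Import all_classical all_reals.
From mathcomp.analysis Require Import sequences exp.
From mathcomp Require Import complex.
Set Implicit Arguments. Unset Strict Implicit. Unset Printing Implicit Defensive.
Import Order.TTheory GRing.Theory Num.Theory.
Local Open Scope ring_scope.
Local Open Scope complex_scope.

Definition cabs (R : realType) (z : R[i]) : R := Normc.normc z.

(* Chebyshev polynomial of the first kind, via the paper's formula
   T_n(u) = ((u + sqrt(u^2-1))^n + (u - sqrt(u^2-1))^n)/2  (used for u >= 1) *)
Definition cheb (R : realType) (n : nat) (u : R) : R :=
  ((u + Num.sqrt (u ^+ 2 - 1)) ^+ n + (u - Num.sqrt (u ^+ 2 - 1)) ^+ n) / 2.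

Notation mindex m n := {ffun 'I_m -> 'I_n.+1}.

Definition monom (R : realType) (m n : nat) (k : mindex m n) (y : 'I_m -> R) : R :=
  \prod_(j < m) y j ^+ k j.

Definition polyU (R : realType) (m n : nat) (c : mindex m n -> R[i])
  (y : 'I_m -> R) : R[i] :=
  \sum_(k : mindex m n) c k * (monom k y)%:C.

Definition cube (R : realType) (m : nat) (A B : R) : set ('I_m -> R) :=
  [set y | forall j, A <= y j <= B].

Definition supnorm (R : realType) (m n : nat) (c : mindex m n -> R[i])
  (S : set ('I_m -> R)) : R :=
  sup [set cabs (polyU c y) | y in S].

Arguments cube {R} m A B.

(* Main.v *)
Require Import Defs.
From HB Require Import structures.
From mathcomp Require Import all_boot all_order all_algebra.
From mathcomp Require Import all_classical all_reals.
From mathcomp.analysis Require Import sequences exp.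
From mathcomp Require Import complex.
From mathcomp.analysis Require Import trigo.
From mathcomp Require Import ring lra.
Import Order.TTheory GRing.Theory Num.Theory.
Local Open Scope ring_scope.

Fixpoint Tpair (R : realType) (n : nat) : {poly R} * {poly R} :=
  match n with
  | 0 => (1, 'X)
  | n'.+1 => let (a, b) := Tpair R n' in (b, 2%:P * 'X * b - a)
  end.
Definition Tp (R : realType) n := (Tpair R n).1.

Lemma Tp0 (R : realType) : Tp R 0 = 1. Proof. by []. Qed.
Lemma Tp1 (R : realType) : Tp R 1 = 'X. Proof. by []. Qed.
Lemma TpSS (R : realType) n : Tp R n.+2 = 2%:P * 'X * Tp R n.+1 - Tp R n.
Proof. by rewrite /Tp /=; case: (Tpair R n). Qed.

Lemma two_ind (P : nat -> Prop) : P 0 -> P 1 -> (forall n, P n -> P n.+1 -> P n.+2) -> forall n, P n.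
Proof.
move=> h0 h1 hS n; suff: P n /\ P n.+1 by case.
by elim: n => [|n [a b]]; split => //; apply: hS.
Qed.

Lemma size_Tp (R : realType) n : (size (Tp R n) <= n.+1)%N.
Proof.
elim/two_ind: n => [|| n h1 h2]; first by rewrite Tp0 size_poly1.
  by rewrite Tp1 size_polyX.
rewrite TpSS (leq_trans (size_polyD _ _)) // geq_max; apply/andP; split.
  rewrite -mulrA mul_polyC (leq_trans (size_scale_leq _ _)) //.
  by rewrite (leq_trans (size_polyMleq _ _)) // size_polyX /=.
by rewrite size_polyN (leq_trans h1) // ltnW.
Qed.

Lemma Tp_cos (R : realType) n (x : R) : (Tp R n).[cos x] = cos (n%:R * x).
Proof.
elim/two_ind: n => [|| n h1 h2]; first by rewrite Tp0 hornerE mul0r cos0.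
  by rewrite Tp1 hornerX mul1r.
rewrite TpSS !hornerE h1 h2.
have -> : n.+2%:R * x = n.+1%:R * x + x by rewrite -(addn1 n.+1) natrD mulrDl mul1r.
have -> : n%:R * x = n.+1%:R * x - x by rewrite -(addn1 n) natrD mulrDl mul1r addrK.
rewrite !cosD cosN sinN; ring.
Qed.

Lemma Tp_N (R : realType) n (x : R) : (Tp R n).[- x] = (-1) ^+ n * (Tp R n).[x].
Proof.
elim/two_ind: n => [|| n h1 h2]; first by rewrite Tp0 !hornerE.
  by rewrite Tp1 !hornerX expr1 mulN1r.
rewrite TpSS !hornerE h1 h2 !exprS; ring.
Qed.

Lemma Tp_cheb (R : realType) n (u : R) : 1 <= u ^+ 2 -> (Tp R n).[u] = cheb n u.
Proof.
move=> hu; rewrite /cheb; set s := Num.sqrt _.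
have hs : s ^+ 2 = u ^+ 2 - 1 by rewrite sqr_sqrtr // subr_ge0.
elim/two_ind: n => [|| n h1 h2]; first by rewrite Tp0 hornerE !expr0; field.
  by rewrite Tp1 hornerX !expr1; field.
rewrite TpSS !hornerE h1 h2.
have ea : (u + s) ^+ 2 = 2 * u * (u + s) - 1 by rewrite !expr2 in hs *; nra.
have eb : (u - s) ^+ 2 = 2 * u * (u - s) - 1 by rewrite !expr2 in hs *; nra.
have rec a : a ^+ 2 = 2 * u * a - 1 -> a ^+ n.+2 = 2 * u * a ^+ n.+1 - a ^+ n.
  by move=> h; rewrite -(addn2 n) exprD h -(addn1 n) exprD expr1; ring.
by rewrite (rec _ ea) (rec _ eb); field.
Qed.

Set Implicit Arguments. Unset Strict Implicit. Unset Printing Implicit Defensive.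

Definition rs (R : realType) n (y : nat -> R) (i : 'I_n.+1) : seq R :=
  [seq y (nat_of_ord j) | j <- [seq j <- index_enum 'I_n.+1 | j != i]].
Definition Pn (R : realType) n (y : nat -> R) (i : 'I_n.+1) : {poly R} :=
  \prod_(x <- rs y i) ('X - x%:P).
Definition Ln (R : realType) n (y : nat -> R) (i : 'I_n.+1) : {poly R} :=
  ((Pn y i).[y i])^-1 *: Pn y i.

Lemma size_rs (R : realType) n (y : nat -> R) (i : 'I_n.+1) : size (rs y i) = n.
Proof.
rewrite size_map size_filter. have := cardC1 i. rewrite card_ord /= => h.
by rewrite -[in RHS]h cardE /enum_mem size_filter.
Qed.

Lemma size_Pn (R : realType) n (y : nat -> R) (i : 'I_n.+1) : size (Pn y i) = n.+1.
Proof. by rewrite /Pn size_prod_XsubC size_rs. Qed.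

Lemma size_Ln (R : realType) n (y : nat -> R) (i : 'I_n.+1) : (size (Ln y i) <= n.+1)%N.
Proof. by rewrite /Ln (leq_trans (size_scale_leq _ _)) // size_Pn. Qed.

Lemma Pn_node_ne0 (R : realType) n (y : nat -> R) (i : 'I_n.+1) :
  {in predT &, injective (fun j : 'I_n.+1 => y (nat_of_ord j))} ->
  (Pn y i).[y i] != 0.
Proof.
move=> inj; apply/negP => /eqP/rootP; rewrite /Pn root_prod_XsubC.
case/mapP => j; rewrite mem_filter => /andP [ji _] /(inj _ _ isT isT) e.
by rewrite e eqxx in ji.
Qed.

Lemma Ln_node (R : realType) n (y : nat -> R) (i k : 'I_n.+1) :
  {in predT &, injective (fun j : 'I_n.+1 => y (nat_of_ord j))} ->
  (Ln y i).[y k] = (i == k)%:R.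
Proof.
move=> inj; rewrite /Ln hornerZ; case: eqP => [<-|ik].
  by rewrite mulVf // Pn_node_ne0.
have : root (Pn y i) (y k).
  rewrite /Pn root_prod_XsubC; apply/mapP; exists k => //.
  by rewrite mem_filter mem_index_enum andbT eq_sym; apply/eqP.
by move/rootP => ->; rewrite mulr0.
Qed.

Lemma interp (R : realType) n (y : nat -> R) (q : {poly R}) :
  {in predT &, injective (fun j : 'I_n.+1 => y (nat_of_ord j))} ->
  (size q <= n.+1)%N -> q = \sum_(i < n.+1) q.[y i] *: Ln y i.
Proof.
move=> inj sq; apply/eqP; rewrite -subr_eq0; apply/negPn/negP => d0.
have := @max_poly_roots R _ [seq y (nat_of_ord j) | j <- enum 'I_n.+1] d0.
rewrite size_map size_enum_ord.
have sd : (size (q - \sum_(i < n.+1) q.[y i] *: Ln y i)%R <= n.+1)%N.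
  rewrite (leq_trans (size_polyD _ _)) // geq_max sq size_polyN.
  apply: (big_ind (fun p : {poly R} => size p <= n.+1)%N) => //.
    by rewrite size_poly0.
    by move=> p1 p2 h1 h2; rewrite (leq_trans (size_polyD _ _)) // geq_max h1.
  by move=> i _; rewrite (leq_trans (size_scale_leq _ _)) // size_Ln.
move=> h; suff: (n.+1 < size (q - \sum_(i < n.+1) q.[y i] *: Ln y i)%R)%N by rewrite ltnNge sd.
apply: h.
  apply/allP => _ /mapP [k _ ->]; apply/rootP.
  rewrite hornerD hornerN horner_sum (bigD1 k) //= hornerZ Ln_node // eqxx mulr1.
  rewrite big1 ?addr0 ?subrr // => i ik; rewrite hornerZ Ln_node //.
  by rewrite (negbTE ik) mulr0.
rewrite map_inj_in_uniq ?enum_uniq //.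
by move=> a b _ _; apply: inj.
Qed.

Lemma Ln_coef_id (R : realType) n (y : nat -> R) (a b : 'I_n.+1) :
  {in predT &, injective (fun j : 'I_n.+1 => y (nat_of_ord j))} ->
  \sum_(i < n.+1) y i ^+ a * (Ln y i)`_b = (a == b)%:R.
Proof.
move=> inj; have := interp inj (q := 'X^a); rewrite size_polyXn ltn_ord.
move=> /(_ isT) /(congr1 (fun p : {poly R} => p`_b)); rewrite coef_sum coefXn.
move=> e; rewrite eq_sym e; apply: eq_bigr => i _; by rewrite coefZ hornerXn.
Qed.

Lemma prod_coef_sign (R : realType) (r : seq R) : all (fun x => 0 <= x) r ->
  forall b, 0 <= (-1) ^+ (size r + b) * (\prod_(x <- r) ('X - x%:P))`_b.
Proof.
elim: r => [_ b|x r IH /andP [x0 hr] b].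
  by rewrite big_nil coef1; case: b => [|b] //=; rewrite ?mulr0 // mulr1.
rewrite big_cons mulrBl coefB coefXM coefCM /=.
have := IH hr; set Q := (\prod_(x <- r) ('X - x%:P)) => IH'.
case: b => [|b] /=.
  have h := IH' 0; set P := Q`_0 in h *.
  have -> : (-1) ^+ ((size r).+1 + 0) * (0 - x * P) = x * ((-1) ^+ (size r + 0) * P).
    by rewrite !addn0 exprS; ring.
  exact: mulr_ge0.
have h0 := IH' b; have h1 := IH' b.+1.
set P1 := Q`_b.+1 in h1 *; set P0 := Q`_b in h0 *.
have -> : (-1) ^+ ((size r).+1 + b.+1) * (P0 - x * P1) =
   (-1) ^+ (size r + b) * P0 + x * ((-1) ^+ (size r + b.+1) * P1).
  by rewrite addSn addnS !exprS; ring.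
by apply: addr_ge0 => //; apply: mulr_ge0.
Qed.

Lemma sum_abs_Pn (R : realType) n (y : nat -> R) (i : 'I_n.+1) :
  (forall j : 'I_n.+1, 0 <= y j) ->
  \sum_(b < n.+1) `|(Pn y i)`_b| = (-1) ^+ n * (Pn y i).[-1].
Proof.
move=> y0; rewrite (horner_coef_wide _ (eq_leq (size_Pn y i))) mulr_sumr.
apply: eq_bigr => b _.
have hr : all (fun x => 0 <= x) (rs y i) by apply/allP => _ /mapP [j _ ->].
have := prod_coef_sign hr b; rewrite size_rs -/(Pn y i) => h.
have e : `|(Pn y i)`_b| = (-1) ^+ (n + b) * (Pn y i)`_b.
  by rewrite -[RHS](ger0_norm h) normrM normrX normrN1 expr1n mul1r.
by rewrite e exprD; ring.
Qed.

Lemma prod_neg_sign (R : realType) (F : nat -> R) p :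
  (forall j, (j < p)%N -> F j < 0) -> 0 < (-1) ^+ p * \prod_(0 <= j < p) F j.
Proof.
elim: p => [|p IH] h; first by rewrite big_geq // mulr1 expr0.
rewrite big_nat_recr //=.
have -> : (-1) ^+ p.+1 * (\prod_(0 <= i < p) F i * F p) =
  ((-1) ^+ p * \prod_(0 <= i < p) F i) * (- F p) by rewrite exprS; ring.
apply: mulr_gt0; first by apply: IH => j jp; apply: h; rewrite ltnS ltnW.
by rewrite oppr_gt0 h.
Qed.

Lemma Pn_node_sign (R : realType) n (y : nat -> R) (i : 'I_n.+1) :
  (forall j k, (j < k <= n)%N -> y k < y j) ->
  0 < (-1) ^+ i * (Pn y i).[y i].
Proof.
move=> dec; rewrite /Pn horner_prod big_map big_filter.
under eq_bigr do rewrite hornerXsubC.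
rewrite -(big_mkord (fun j => j != i) (fun j => y i - y j)).
have iS : (i <= n.+1)%N by rewrite ltnW.
rewrite (big_cat_nat (leq0n i) iS) /= (big_ltn_cond (ltn_ord i)) eqxx /=.
rewrite mulrA mulr_gt0 //.
  rewrite big_nat_cond (eq_bigl (fun j => (0 <= j < i)%N && true)); last first.
    move=> j /=; case: (ltnP j i) => /= ji; rewrite ?andbF ?andbT //.
    by rewrite neq_ltn ji.
  rewrite -big_nat_cond; apply: prod_neg_sign => j ji.
  by rewrite subr_lt0; apply: dec; rewrite ji -ltnS ltn_ord.
rewrite big_nat_cond; apply: prodr_gt0 => j /andP [/andP [ij jn] _].
by rewrite subr_gt0; apply: dec; rewrite ij -ltnS.
Qed.

Definition ynode (R : realType) (A B : R) n (j : nat) : R :=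
  (B - A) / 2 * cos (j%:R * pi / n%:R) + (B + A) / 2.

Lemma ynode_dec (R : realType) (A B : R) n : A < B ->
  forall j k, (j < k <= n)%N -> ynode A B n k < ynode A B n j.
Proof.
move=> AB j k /andP [jk kn].
have n0 : (0 < n)%N by apply: leq_trans kn; apply: leq_ltn_trans jk.
have n0' : 0 < n%:R :> R by rewrite ltr0n.
rewrite /ynode ltrD2r ltr_pM2l ?divr_gt0 ?subr_gt0 //.
have inI (l : nat) : (l <= n)%N -> (l%:R * pi / n%:R : R) \in `[0, pi].
  move=> ln; have h1 : (0 : R) <= l%:R * pi / n%:R by apply: divr_ge0; rewrite ?mulr_ge0 ?pi_ge0 // ltW.
  have h2 : l%:R * pi / n%:R <= (pi : R).
    rewrite ler_pdivrMr // [pi * _]mulrC ler_wpM2r ?pi_ge0 // ler_nat //.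
  by rewrite in_itv /= h1 h2.
rewrite ltr_cos ?inI //; last by rewrite ltnW // (leq_trans jk).
by rewrite (ltr_pM2r (x := n%:R^-1)) ?invr_gt0 // (ltr_pM2r (x := pi)) ?pi_gt0 // ltr_nat.
Qed.

Lemma ynode_inj (R : realType) (A B : R) n : A < B ->
  {in predT &, injective (fun j : 'I_n.+1 => ynode A B n j)}.
Proof.
move=> AB j k _ _ e; apply/val_inj => /=.
case: (ltngtP j k) => // jk.
  have := @ynode_dec R A B n AB j k; rewrite jk leq_ord e ltxx.
  by move=> /(_ isT).
have := @ynode_dec R A B n AB k j; rewrite jk leq_ord e ltxx.
by move=> /(_ isT).
Qed.

Lemma ynode_in (R : realType) (A B : R) n j : A < B ->
  A <= ynode A B n j <= B.
Proof.
move=> AB; rewrite /ynode; have := cos_le1 (j%:R * (pi : R) / n%:R).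
have := cos_geN1 (j%:R * (pi : R) / n%:R); set c := cos _ => h1 h2.
have p1 : 0 <= (B - A) * (1 - c) by apply: mulr_ge0; lra.
have p2 : 0 <= (B - A) * (c + 1) by apply: mulr_ge0; lra.
apply/andP; split; lra.
Qed.

Definition tpoly (R : realType) (A B : R) : {poly R} :=
  (2 / (B - A)) *: 'X - ((B + A) / (B - A))%:P.

Lemma Q_node (R : realType) (A B : R) n (j : nat) : A < B -> (j <= n)%N ->
  (Tp R n \Po tpoly A B).[ynode A B n j] = (-1) ^+ j.
Proof.
move=> AB jn; rewrite horner_comp.
have -> : (tpoly A B).[ynode A B n j] = cos (j%:R * pi / n%:R).
  rewrite /tpoly /ynode !hornerE; field.
  by rewrite subr_eq0 gt_eqF.
rewrite Tp_cos; case: n jn => [|n] jn.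
  by move: jn; rewrite leqn0 => /eqP ->; rewrite !mul0r cos0 expr0.
rewrite mulrCA divff ?pnatr_eq0 // mulr1.
elim: (j) => [|l IH]; first by rewrite mul0r cos0 expr0.
by rewrite -addn1 natrD mulrDl mul1r cosDpi IH exprD expr1 mulrN1.
Qed.

Lemma size_Q (R : realType) (A B : R) n : (size (Tp R n \Po tpoly A B) <= n.+1)%N.
Proof.
rewrite (leq_trans (size_comp_poly_leq _ _)) // ltnS.
have st : (size (tpoly A B) <= 2)%N.
  rewrite /tpoly (leq_trans (size_polyD _ _)) // geq_max size_polyN size_polyC.
  rewrite (leq_trans (size_scale_leq _ _)) ?size_polyX //.
  by case: (_ != 0).
have sT := size_Tp R n.
rewrite -[X in (_ <= X)%N](muln1 n) leq_mul //; first by move: sT; case: (size _).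
by move: st; case: (size _) => [|[|[|]]].
Qed.

Definition Sv (R : realType) n (y : nat -> R) (i : 'I_n.+1) : R :=
  \sum_(b < n.+1) `|(Ln y i)`_b|.

Lemma sign_sqr (R : realType) n : (-1) ^+ n * (-1) ^+ n = 1 :> R.
Proof. by rewrite -signr_odd; case: (odd n); rewrite ?expr0 ?expr1 ?mulr1 ?mulrNN ?mulr1. Qed.

Lemma Sv_eq (R : realType) n (y : nat -> R) (i : 'I_n.+1) :
  (forall j : 'I_n.+1, 0 <= y j) ->
  (forall j k, (j < k <= n)%N -> y k < y j) ->
  Sv y i = (-1) ^+ n * (-1) ^+ i * (Ln y i).[-1].
Proof.
move=> y0 dec; have hd := Pn_node_sign i dec.
set d := (Pn y i).[y i] in hd *.
have dn : `|d| = (-1) ^+ i * d.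
  by rewrite -(gtr0_norm hd) normrM normrX normrN1 expr1n mul1r.
rewrite /Sv /Ln -/d; under eq_bigr do rewrite coefZ normrM.
rewrite -mulr_sumr sum_abs_Pn // hornerZ normfV dn invfM.
have -> : ((-1) ^+ i)^-1 = (-1) ^+ i :> R.
  by rewrite -signr_odd; case: (odd i); rewrite ?expr0 ?expr1 ?invr1 ?invrN1.
ring.
Qed.

Lemma sum_Sv (R : realType) (A B : R) n : 0 < A -> A < B ->
  \sum_(i < n.+1) Sv (ynode A B n) i = cheb n ((B + A + 2) / (B - A)).
Proof.
move=> A0 AB.
have y0 (j : 'I_n.+1) : 0 <= ynode A B n j.
  by have /andP [h _] := ynode_in n j AB; apply: le_trans h; apply: ltW.
have dec := ynode_dec (n := n) AB.
have inj := @ynode_inj R A B n AB.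
rewrite (eq_bigr _ (fun i _ => Sv_eq i y0 dec)).
have hQ := interp inj (size_Q A B n).
have e : (Tp R n \Po tpoly A B).[-1] =
    \sum_(i < n.+1) (-1) ^+ i * (Ln (ynode A B n) i).[-1].
  rewrite {1}hQ horner_sum; apply: eq_bigr => i _.
  by rewrite hornerZ (@Q_node R A B n _ AB (leq_ord _)).
have -> : \sum_(i < n.+1) (-1) ^+ n * (-1) ^+ i * (Ln (ynode A B n) i).[-1] =
   (-1) ^+ n * \sum_(i < n.+1) (-1) ^+ i * (Ln (ynode A B n) i).[-1].
  by rewrite mulr_sumr; apply: eq_bigr => i _; rewrite mulrA.
rewrite -e horner_comp.
have -> : (tpoly A B).[-1] = - ((B + A + 2) / (B - A)).
  rewrite /tpoly hornerD hornerN hornerZ hornerX hornerC; field.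
  by rewrite subr_eq0 gt_eqF.
rewrite Tp_N mulrA sign_sqr mul1r Tp_cheb //.
have u1 : 1 <= (B + A + 2) / (B - A).
  rewrite ler_pdivlMr ?subr_gt0 // mul1r; lra.
by rewrite expr2; nra.
Qed.
Local Open Scope complex_scope.

Lemma normE (R : realType) (z : R[i]) : `|z| = (cabs z)%:C.
Proof. by case: z => a b; rewrite normc_def. Qed.

Lemma cabs_ge0 (R : realType) (z : R[i]) : 0 <= cabs z.
Proof. by case: z => a b; rewrite /cabs /= sqrtr_ge0. Qed.

Lemma cabs_sum (R : realType) (I : Type) (r : seq I) (P : pred I) (F : I -> R[i]) :
  cabs (\sum_(i <- r | P i) F i) <= \sum_(i <- r | P i) cabs (F i).
Proof.
rewrite -lecR -normE rmorph_sum (eq_bigr _ (fun i _ => esym (normE (F i)))).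
exact: ler_norm_sum.
Qed.

Lemma cabs_mul (R : realType) (x y : R[i]) : cabs (x * y) = cabs x * cabs y.
Proof. exact: Normc.normcM. Qed.

Lemma cabs_real (R : realType) (x : R) : cabs (x%:C) = `|x|.
Proof. by rewrite /cabs /= expr0n /= addr0 sqrtr_sqr. Qed.

Lemma supnorm_ge (R : realType) m n (c : mindex m n -> R[i]) (A B : R) y :
  cube m A B y -> cabs (polyU c y) <= supnorm c (cube m A B).
Proof.
move=> hy; apply: ub_le_sup; last by exists y.
exists (\sum_(k : mindex m n) cabs (c k) * \prod_(j < m) (`|A| + `|B|) ^+ k j).
move=> _ [z hz <-]; rewrite /polyU; apply: le_trans (cabs_sum _ _ _) _.
apply: ler_sum => k _; rewrite cabs_mul cabs_real ler_wpM2l ?cabs_ge0 //.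
rewrite /monom normr_prod; apply: ler_prod => j _; rewrite normr_ge0 /=.
rewrite normrX lerXn2r ?nnegrE ?normr_ge0 ?addr_ge0 ?normr_ge0 //.
have := hz j; move=> /andP [h1 h2].
have a1 := ler_norm A; have a2 := ler_norm (- A); rewrite normrN in a2.
have b1 := ler_norm B; have b2 := ler_norm (- B); rewrite normrN in b2.
have a0 := normr_ge0 A; have b0 := normr_ge0 B.
rewrite ler_norml; apply/andP; split; lra.
Qed.

Lemma coef_formula (R : realType) m n (c : mindex m n -> R[i]) (y : nat -> R)
  (l : 'I_n.+1 -> 'I_n.+1 -> R) :
  (forall a b : 'I_n.+1, \sum_(i < n.+1) y i ^+ a * l i b = (a == b)%:R) ->
  forall k, c k = \sum_(I : mindex m n)
     polyU c (fun j => y (I j)) * (\prod_(j < m) l (I j) (k j))%:C.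
Proof.
move=> hid k.
transitivity (\sum_(k' : mindex m n) c k' * ((k' == k)%:R)%:C).
  rewrite (bigD1 k) //= eqxx mulr1 big1 ?addr0 // => k' /negbTE ->.
  by rewrite rmorph0 mulr0.
rewrite /polyU; under [RHS]eq_bigr do rewrite mulr_suml.
rewrite [RHS]exchange_big /=; apply: eq_bigr => k' _.
under eq_bigr do rewrite -mulrA -rmorphM.
rewrite -mulr_sumr -rmorph_sum; congr (_ * _%:C).
rewrite /monom; under eq_bigr do rewrite -big_split /=.
rewrite -(bigA_distr_bigA (fun (j : 'I_m) (i : 'I_n.+1) => y i ^+ k' j * l i (k j))) /=.
under eq_bigr do rewrite hid.
case: (eqVneq k' k) => [->|nk].
  by rewrite big1 // => j _; rewrite eqxx.
have [j hj] : exists j, k' j != k j.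
  apply/existsP; move: nk; apply: contraR; rewrite negb_exists => /forallP h.
  by apply/eqP/ffunP => j; apply/eqP; rewrite -[_ == _]negbK; exact: h j.
by rewrite (bigD1 j) //= (negbTE hj) mul0r.
Qed.

Close Scope complex_scope.

Lemma cheb_le (R : realType) (a : R) n : 1 < a ->
  0 <= cheb n ((a ^+ 4 + a^-1 ^+ 4 + 2) / (a ^+ 4 - a^-1 ^+ 4)) <=
  ((a + a^-1) / (a - a^-1)) ^+ n.
Proof.
move=> a1.
have a0 : a != 0 by rewrite gt_eqF // (lt_trans ltr01).
set t := a ^+ 2.
have t1 : 1 < t by rewrite /t expr2; nra.
have t0 : t != 0 by rewrite gt_eqF // (lt_trans ltr01).
have tt1 : t ^+ 2 - 1 != 0 by rewrite subr_eq0 gt_eqF // expr2; nra.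
have eu : (a ^+ 4 + a^-1 ^+ 4 + 2) / (a ^+ 4 - a^-1 ^+ 4) = (t ^+ 2 + 1) / (t ^+ 2 - 1).
  have e4 : a ^+ 4 = t ^+ 2 by rewrite /t -exprM.
  have e4' : a^-1 ^+ 4 = (t ^+ 2)^-1 by rewrite /t -exprM exprVn.
  rewrite e4 e4'; field.
  have tt : 1 < t * t by nra.
  by rewrite tt1 t0 /= subr_eq0 gt_eqF // expr2; nra.
have eq : (a + a^-1) / (a - a^-1) = (t + 1) / (t - 1).
  rewrite /t; field; rewrite a0 /= andbT.
  by rewrite subr_eq0 gt_eqF // expr2; nra.
rewrite eu eq /cheb.
set u := (t ^+ 2 + 1) / (t ^+ 2 - 1).
have es : Num.sqrt (u ^+ 2 - 1) = 2 * t / (t ^+ 2 - 1).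
  have -> : u ^+ 2 - 1 = (2 * t / (t ^+ 2 - 1)) ^+ 2 by rewrite /u; field.
  rewrite sqrtr_sqr ger0_norm // divr_ge0 // ?subr_ge0.
    by rewrite mulr_ge0 // ltW // (lt_trans ltr01).
  by rewrite expr2; nra.
rewrite es.
have ep : u + 2 * t / (t ^+ 2 - 1) = (t + 1) / (t - 1).
  rewrite /u; field; rewrite tt1 /= subr_eq0 gt_eqF //.
have em : 0 <= u - 2 * t / (t ^+ 2 - 1) <= (t + 1) / (t - 1).
  have -> : u - 2 * t / (t ^+ 2 - 1) = (t - 1) / (t + 1).
    rewrite /u; field; rewrite tt1 /= ?subr_eq0 ?gt_eqF //.
    by rewrite (lt_trans ltr01) // (lt_le_trans t1) // lerDl ler01.
  have q1 : 0 < t - 1 by rewrite subr_gt0.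
  have q2 : 0 < t + 1 by lra.
  apply/andP; split; first by rewrite divr_ge0 // ltW.
  rewrite ler_pdivrMr // mulrAC ler_pdivlMr //; nra.
rewrite ep; move: em; set v := u - _; set w := (t + 1) / (t - 1) => /andP [v0 vw].
have w0 : 0 <= w by apply: le_trans vw.
apply/andP; split.
  by rewrite divr_ge0 // addr_ge0 // exprn_ge0.
rewrite ler_pdivrMr // mulr_natr mulr2n lerD2l lerXn2r // nnegrE //.
Qed.

Lemma partA (R : realType) (m n : nat) (c : mindex m n -> R[i]) (A B : R) :
  0 < A -> A < B ->
  \sum_(k : mindex m n) cabs (c k)
    <= cheb n ((B + A + 2) / (B - A)) ^+ m * supnorm c (cube m A B).
Proof.
move=> A0 AB.
set y := ynode A B n.
set l := fun i b : 'I_n.+1 => (Ln y i)`_b.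
have inj := @ynode_inj R A B n AB.
have hid : forall a b : 'I_n.+1, \sum_(i < n.+1) y i ^+ a * l i b = (a == b)%:R.
  by move=> a b; exact: Ln_coef_id.
set M := supnorm c (cube m A B).
have hW : forall I : mindex m n, cabs (polyU c (fun j => y (I j))) <= M.
  by move=> I; apply: supnorm_ge => j; exact: ynode_in.
have step : forall k : mindex m n, cabs (c k) <=
    \sum_(I : mindex m n) M * \prod_(j < m) `|l (I j) (k j)|.
  move=> k; rewrite {1}(coef_formula c hid k); apply: le_trans (cabs_sum _ _ _) _.
  apply: ler_sum => I _; rewrite cabs_mul cabs_real normr_prod ler_wpM2r ?hW //.
  by apply: prodr_ge0 => j _; apply: normr_ge0.
apply: le_trans (ler_sum _ (fun k _ => step k)) _.
rewrite exchange_big /=.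
have -> : \sum_(I : mindex m n) \sum_(k : mindex m n) M * \prod_(j < m) `|l (I j) (k j)| =
    \sum_(I : mindex m n) M * \prod_(j < m) Sv y (I j).
  apply: eq_bigr => I _; rewrite -mulr_sumr; congr (_ * _).
  by rewrite /Sv bigA_distr_bigA.
rewrite -mulr_sumr -(bigA_distr_bigA (fun (j : 'I_m) (i : 'I_n.+1) => Sv y i)) /=.
rewrite (eq_bigr _ (fun j _ => sum_Sv n A0 AB)); by rewrite prodr_const card_ord mulrC.
Qed.

Unset Implicit Arguments.

Theorem lemmaL2p6 (R : realType) (m n : nat) (c : mindex m n -> R[i]) :
  (forall A B : R, 0 < A -> A < B ->
     \sum_(k : mindex m n) cabs (c k)
       <= cheb n ((B + A + 2) / (B - A)) ^+ m * supnorm c (cube m A B)) /\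
  (forall b : R, 0 < b ->
     \sum_(k : mindex m n) cabs (c k)
       <= ((expR (b / 4) + expR (- (b / 4))) / (expR (b / 4) - expR (- (b / 4))))
            ^+ (m * n) * supnorm c (cube m (expR (- b)) (expR b))).
Proof.
split; first by move=> A B; exact: partA.
move=> b b0; set a := expR (b / 4).
have a1 : 1 < a by rewrite /a expR_gt1 divr_gt0.
have a0 : 0 < a by apply: lt_trans a1.
have eB : expR b = a ^+ 4.
  by rewrite /a -expRM_natl; congr expR; field.
have eA : expR (- b) = a^-1 ^+ 4 by rewrite expRN eB exprVn.
rewrite expRN -/a eA eB.
have hA : 0 < a^-1 ^+ 4 by rewrite exprn_gt0 // invr_gt0.
have hAB : a^-1 ^+ 4 < a ^+ 4.
  have ia : a^-1 < a.
    by rewrite -[a^-1]mul1r (ltr_pdivrMr _ _ a0); nra.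
  by rewrite ltrXn2r // ltW // invr_gt0.
have [ch0 chle] := andP (cheb_le n a1).
have M0 : 0 <= supnorm c (cube m (a^-1 ^+ 4) (a ^+ 4)).
  apply: le_trans (cabs_ge0 (polyU c (fun _ => a ^+ 4))) _.
  by apply: supnorm_ge => j; rewrite lexx andbT ltW.
apply: le_trans (partA c hA hAB) _.
rewrite ler_wpM2r // mulnC exprM lerXn2r // nnegrE //.
by apply: le_trans chle.
Qed.
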